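(* There exists a joint distribution $\mathbf{p}$ of random variables $(Y,\mathbf{B},A,Z^* )$, with $Y\in\{0,1\}$, $A\in\{0,1\}$, $\mathbf{B}$ taking values in $\mathcal{X}^b\subseteq\mathbb{R}^n$, and $Z^*=Z$ if $A=1$ and $Z^*=\texttt{N/A}$ if $A=0$ (where $Z$ is real-valued), such that the model $$f_{\text{csp}}(\mathbf{b},a,z^* )=\begin{cases}\mathbb{E}[Y\mid \mathbf{B}=\mathbf{b},A=1] & \text{if } a=0,\\ \mathbb{E}[Y\mid \mathbf{B}=\mathbf{b},A=1,Z^*=z^*] & \text{if } a=1\end{cases}$$ has strictly larger expected squared loss than the base model $f^*_{\text{base}}(\mathbf{b})=\mathbb{E}[Y\mid \mathbf{B}=\mathbf{b}]$, i.e. $$\mathbb{E}\big[(Y-f^*_{\text{base}}(\mathbf{B}))^2\big]<\mathbb{E}\big[(Y-f_{\text{csp}}(\mathbf{B},A,Z^* ))^2\big].$$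
   Context: Setting: each individual has base features $\mathbf{b}\in\mathcal{X}^b\subseteq\mathbb{R}^n$, an optional real-valued feature $z$, an availability indicator $a\in\{0,1\}$ (whether $z$ was disclosed), and observed imputed value $z^*=z$ if $a=1$ and $z^*=\texttt{N/A}$ if $a=0$; the label is $Y$. $f_{\text{csp}}$ is the model obtained by imposing conditional statistical parity $\mathbb{E}[\hat Y\mid \mathbf{B}=\mathbf{b},A=0]=\mathbb{E}[\hat Y\mid \mathbf{B}=\mathbf{b},A=1]$ together with predicting the conditional mean given all information when $a=1$. *)

(* Defs.v *)
From HB Require Import structures.
From mathcomp Require Import all_boot all_order all_algebra.
From mathcomp Require Import reals.
Set Implicit Arguments. Unset Strict Implicit. Unset Printing Implicit Defensive.
Import Order.TTheory GRing.Theory Num.Theory.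
Local Open Scope ring_scope.

(* An outcome (y, b, a, z^* ) : y in {0,1}, b in R^n, a in {0,1},
   z^* : option R, with None standing for N/A. *)
Definition outcome (R : realType) (n : nat) : Type :=
  (bool * 'rV[R]_n * bool * option R)%type.

Section Dist.
Variables (R : realType) (n : nat).
Definition oY (t : outcome R n) : R := (t.1.1.1)%:R.
Definition oB (t : outcome R n) : 'rV[R]_n := t.1.1.2.
Definition oA (t : outcome R n) : bool := t.1.2.
Definition oZ (t : outcome R n) : option R := t.2.

(* A finitely supported distribution: list of (probability mass, outcome). *)
Definition fdist := seq (R * outcome R n).

Definition prob (p : fdist) (P : pred (outcome R n)) : R :=
  \sum_(x <- p | P x.2) x.1.

Definition condEY (p : fdist) (P : pred (outcome R n)) : R :=
  (\sum_(x <- p | P x.2) x.1 * oY x.2) / prob p P.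

Definition sq_loss (p : fdist) (f : outcome R n -> R) : R :=
  \sum_(x <- p) x.1 * (oY x.2 - f x.2) ^+ 2.

Definition valid_dist (p : fdist) : Prop :=
  (forall x, x \in p -> 0 < x.1) /\
  \sum_(x <- p) x.1 = 1 /\
  (forall x, x \in p -> (oA x.2 = false <-> oZ x.2 = None)).

Definition f_base (p : fdist) (t : outcome R n) : R :=
  condEY p (fun s => oB s == oB t).

Definition f_csp (p : fdist) (t : outcome R n) : R :=
  if oA t then condEY p (fun s => [&& oB s == oB t, oA s & oZ s == oZ t])
  else condEY p (fun s => (oB s == oB t) && oA s).

(* f_csp is well defined on the support: P(B = b, A = 1) > 0 for every
   b in the support (the a = 1 conditioning events automatically have
   positive mass since they contain the atom itself). *)
Definition csp_well_defined (p : fdist) : Prop :=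
  forall x, x \in p -> 0 < prob p (fun s => (oB s == oB x.2) && oA s).
End Dist.

(* Main.v *)
Require Import Defs.
From HB Require Import structures.
From mathcomp Require Import all_boot all_order all_algebra.
From mathcomp Require Import reals.
From mathcomp Require Import ring lra.
Import Order.TTheory GRing.Theory Num.Theory.
Local Open Scope ring_scope.

Theorem lemma3p1 (R : realType) (n : nat) :
  exists p : fdist R n,
    valid_dist p /\ csp_well_defined p /\
    sq_loss p (f_base p) < sq_loss p (f_csp p).
Proof.
pose h : R := 2^-1.
have hh : h + h = 1 by rewrite /h; field.
have h0 : 0 < h by rewrite /h invr_gt0 ltr0n.
exists [:: (h, (true, 0 : 'rV[R]_n, false, None));
          (h, (false, 0 : 'rV[R]_n, true, Some 0))].
split; [split; [|split]|split].
- by move=> x; rewrite !inE => /orP[]/eqP->.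
- by rewrite !big_cons big_nil addr0.
- by move=> x; rewrite !inE => /orP[]/eqP->.
- move=> x; rewrite !inE => /orP[]/eqP-> ;
  by rewrite /prob !big_cons big_nil /= !eqxx /= addr0.
- rewrite /sq_loss /f_base /f_csp /condEY /prob /oY /oB /oA /oZ !big_cons !big_nil /=
    !eqxx /=.
  rewrite !mulr1 !mulr0 !addr0 !mul0r hh divr1 subr0 sub0r sqrrN expr1n.
  have e : 1 - h = h by rewrite -hh addrK.
  rewrite e subrr expr0n mulr0 addr0 mulr1 -mulrDr gtr_pMr //.
  have -> : h ^+ 2 + h ^+ 2 = h * (h + h) by rewrite expr2 mulrDr.
  by rewrite hh mulr1 -hh ltrDl.
Qed.
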